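(* The set of $\mathcal{P}$-positions of the Wythoff variant with terminal set $T_5 = \{(x,y) \in \mathbb{Z}_{\ge 0}^2 : x+y \le 5\}$ is exactly $P_5 = T_5 \cup \{(b_n,a_n) : n \in \mathbb{N}\} \cup \{(a_n,b_n) : n \in \mathbb{N}\}$.
   Context: Positions are pairs $(x,y) \in \mathbb{Z}_{\ge 0}^2$. In the Wythoff variant with terminal set $T_5$, from a position $(x,y) \notin T_5$ a move goes to any position in $\{(u,y) : 0 \le u < x\} \cup \{(x,v) : 0 \le v < y\} \cup \{(x-t,y-t) : 1 \le t \le \min(x,y)\}$; positions in $T_5$ have no moves. Players alternate; a player with no move loses (the player who moves into $T_5$ wins). A $\mathcal{P}$-position is one from which the previous player wins with optimal play; equivalently a position is $\mathcal{P}$ iff every move from it leads to a non-$\mathcal{P}$ position. Sequences: Fibonacci numbers $F_1 = F_2 = 1$, $F_{i+2} = F_{i+1} + F_i$. Let $\sigma$ be the substitution on finite sequences over $\{1,2\}$ replacing each entry $1$ by $2$ and each entry $2$ by $2,1$. Let $C_{1,1} = (1)$, $C_{i+1,1} = \sigma(C_{i,1})$. For $i \in \mathbb{N}$ let $C_i$ be the concatenation of five copies of $C_{i,1}$. Let $(c_n)_{n \in \mathbb{N}}$ be the concatenation of $C_1, C_2, C_3, \dots$ in order, $d_n = c_n + 1$, $a_1 = 6$, $a_n = 6 + \sum_{i=1}^{n-1} c_i$, $b_1 = 12$, $b_n = 12 + \sum_{i=1}^{n-1} d_i$. *)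

(* Defs.v *)
From mathcomp Require Import all_boot.
Set Implicit Arguments. Unset Strict Implicit. Unset Printing Implicit Defensive.

Definition inT5 (x y : nat) : bool := x + y <= 5.

(* P-positions, computed by recursion on a fuel bounding x + y:
   a position is P iff every move leads to a non-P position
   (positions in T_5 have no moves, hence are P). *)
Fixpoint isP_fuel (k x y : nat) {struct k} : bool :=
  match k with
  | 0 => true
  | k'.+1 =>
      inT5 x y ||
      [&& all (fun u => ~~ isP_fuel k' u y) (iota 0 x),
          all (fun v => ~~ isP_fuel k' x v) (iota 0 y)
        & all (fun t => ~~ isP_fuel k' (x - t) (y - t)) (iota 1 (minn x y))]
  end.

Definition isP (x y : nat) : bool := isP_fuel (x + y).+1 x y.

Definition sigma (s : seq nat) : seq nat :=
  flatten [seq (if e == 1 then [:: 2] else [:: 2; 1]) | e <- s].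

Definition Ci1 (i : nat) : seq nat := iter i.-1 sigma [:: 1].

Definition Ci (i : nat) : seq nat := flatten (nseq 5 (Ci1 i)).

(* c_n (n >= 1) : the n-th entry of C_1 C_2 C_3 ...  ; the prefix C_1 ... C_n
   has length >= 5n >= n, so it suffices. *)
Definition c (n : nat) : nat := nth 0 (flatten [seq Ci i | i <- iota 1 n]) n.-1.
Definition d (n : nat) : nat := c n + 1.

Definition a (n : nat) : nat := 6 + \sum_(1 <= i < n) c i.
Definition b (n : nat) : nat := 12 + \sum_(1 <= i < n) d i.

(* Main.v *)
Require Import Defs.
From mathcomp Require Import all_boot.
From mathcomp Require Import zify.
From Stdlib Require Import Classical.
Unset Implicit Arguments.

Definition all12 (w : seq nat) := all (fun e => (e == 1) || (e == 2)) w.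

Lemma sigma_cat s t : sigma (s ++ t) = sigma s ++ sigma t.
Proof. by rewrite /sigma map_cat flatten_cat. Qed.

Lemma sigma_cons e s : sigma (e :: s) = sigma [:: e] ++ sigma s.
Proof. by rewrite -cat1s sigma_cat. Qed.

Lemma sigma_flatten ls : sigma (flatten ls) = flatten (map sigma ls).
Proof. by elim: ls => [|x ls IH] //=; rewrite sigma_cat IH. Qed.

Lemma all12_sigma w : all12 (sigma w).
Proof.
elim: w => [|e w IH] //; rewrite sigma_cons /all12 all_cat.
apply/andP; split => //; rewrite /sigma /=; by case: (e == 1).
Qed.

Lemma size_sigma w : all12 w -> size (sigma w) = sumn w.
Proof.
elim: w => [|e w IH] //= /andP [he hw]; rewrite sigma_cons size_cat IH //.
by case/orP: he => /eqP -> .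
Qed.

Lemma size_sigma_ge w : size w <= size (sigma w).
Proof.
elim: w => [|e w IH] //; rewrite sigma_cons size_cat /=.
suff: 0 < size (sigma [:: e]) by lia.
by rewrite /sigma /=; case: (e == 1).
Qed.

Lemma Ci1S i : 1 <= i -> Ci1 i.+1 = sigma (Ci1 i).
Proof. by case: i => [|i] // _; rewrite /Ci1 /=. Qed.

Lemma all12_Ci1 i : all12 (Ci1 i).
Proof. case: i => [|[|i]] //; rewrite /Ci1 /=; exact: all12_sigma. Qed.

Lemma size_Ci1 i : 0 < size (Ci1 i).
Proof.
elim: i => [|i IH] //; case: i IH => [|i] IH //.
rewrite Ci1S //; apply: leq_trans IH (size_sigma_ge _).
Qed.

Definition L N := flatten [seq Ci i | i <- iota 1 N].

Lemma sigma_Ls m N : 1 <= m ->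
  sigma (flatten [seq Ci i | i <- iota m N]) = flatten [seq Ci i | i <- iota m.+1 N].
Proof.
elim: N m => [|N IH] m hm //=.
rewrite sigma_cat IH; last by lia.
by rewrite /Ci sigma_flatten map_nseq Ci1S.
Qed.

Lemma LS N : L N.+1 = [:: 1; 1; 1; 1; 1] ++ sigma (L N).
Proof. by rewrite /L sigma_Ls. Qed.

Lemma all12_L N : all12 (L N).
Proof.
elim: N => [|N IH] //; rewrite LS /all12 all_cat /=; exact: all12_sigma.
Qed.

Lemma size_L N : N <= size (L N).
Proof.
elim: N => [|N IH] //; rewrite LS size_cat /=.
have := size_sigma_ge (L N); lia.
Qed.

Lemma L_prefix N k : exists t, L (N + k) = L N ++ t.
Proof.
elim: N => [|N [t IH]]; first by exists (L k).
exists (sigma t); by rewrite addSn !LS IH sigma_cat catA.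
Qed.

Lemma cE n N : 1 <= n -> n <= N -> c n = nth 0 (L N) n.-1.
Proof.
move=> h1 h2; have -> : N = n + (N - n) by lia.
have [t ->] := L_prefix n (N - n).
rewrite /c nth_cat -/(L n); have := size_L n.
by case: ltnP => //; lia.
Qed.

Lemma c12 n : 1 <= n -> c n = 1 \/ c n = 2.
Proof.
move=> h; rewrite (@cE n n h (leqnn n)).
have hs : n.-1 < size (L n) by have := size_L n; lia.
have := all12_L n => /allP /(_ _ (mem_nth 0 hs)) /orP [] /eqP ->; auto.
Qed.

Lemma c_small n : 1 <= n <= 5 -> c n = 1.
Proof. by case: n => [|[|[|[|[|[|n]]]]]] //. Qed.

Lemma Sdef k N : k <= N -> \sum_(1 <= i < k.+1) c i = sumn (take k (L N)).
Proof.
elim: k => [|k IH] h; first by rewrite big_geq // take0.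
rewrite big_nat_recr //= IH; last by lia.
rewrite (take_nth 0); last by have := size_L N; lia.
by rewrite sumn_rcons (@cE k.+1 N).
Qed.

Lemma sigma_nth w k j : all12 w -> k < size w -> j < nth 0 w k ->
  nth 0 (sigma w) (sumn (take k w) + j) = nth 0 (sigma [:: nth 0 w k]) j.
Proof.
move=> h hk hj.
have E := cat_take_drop k w.
rewrite (drop_nth 0 hk) in E.
move: h; rewrite -{1}E /all12 all_cat /= => /and3P [h1 h2 _].
rewrite -{1}E sigma_cat nth_cat size_sigma // ltnNge leq_addr /= addKn.
rewrite sigma_cons nth_cat size_sigma /= ?h2 // addn0 hj //.
Qed.

Lemma aS n : 1 <= n -> a n.+1 = a n + c n.
Proof. by move=> h; rewrite /a big_nat_recr //= addnA. Qed.

Lemma bS n : 1 <= n -> b n.+1 = b n + c n + 1.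
Proof. by move=> h; rewrite /b big_nat_recr //= /d !addnA. Qed.

Lemma a1 : a 1 = 6.
Proof. by rewrite /a big_geq. Qed.

Lemma b1 : b 1 = 12.
Proof. by rewrite /b big_geq. Qed.

Lemma bE n : 1 <= n -> b n = a n + n + 5.
Proof.
case: n => [|n] //; elim: n => [|n IH] _; first by rewrite a1 b1.
rewrite aS // bS // IH //; lia.
Qed.

Lemma c12' n : 1 <= n -> 1 <= c n <= 2.
Proof. by move=> /c12 [] ->. Qed.

Lemma a_lt n m : 1 <= n -> n < m -> a n < a m.
Proof.
move=> h; elim: m => [|m IH] //; rewrite ltnS leq_eqVlt => /orP [/eqP <-|hm].
  by rewrite aS //; have := @c12' n h; lia.
rewrite aS; last by lia.
have := IH hm; have := @c12' m; lia.
Qed.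

Lemma a_le n m : 1 <= n -> n <= m -> a n <= a m.
Proof.
move=> h; rewrite leq_eqVlt => /orP [/eqP <-//|hm]; have := a_lt n m h hm; lia.
Qed.

Lemma a_ge n : 1 <= n -> n + 5 <= a n.
Proof.
case: n => [|n] //; elim: n => [|n IH] _; first by rewrite a1.
rewrite aS //; have := @c12' n.+1; have := IH isT; lia.
Qed.

Lemma F3 k : c (a k.+1) = 2 /\ (c k.+1 = 2 -> c (a k.+1).+1 = 1).
Proof.
set s := \sum_(1 <= i < k.+1) c i.
have ha : a k.+1 = 6 + s by [].
set M := k + s + 7.
have hs : s = sumn (take k (L M)) by apply: Sdef; lia.
have hk : k < size (L M) by have := size_L M; lia.
have hck : c k.+1 = nth 0 (L M) k by rewrite (@cE k.+1 M) //; lia.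
have he := c12' k.+1 isT.
have key : forall j, j < c k.+1 -> c (6 + s + j) = nth 0 (sigma [:: c k.+1]) j.
  move=> j hj; rewrite (@cE _ M.+1); [|lia|lia].
  rewrite LS nth_cat /=.
  have -> : 5 + s + j - 5 = s + j by lia.
  rewrite hs hck; apply: sigma_nth => //; [exact: all12_L | by rewrite -hck].
rewrite ha; split.
  have := key 0; rewrite addn0 => -> //; last by lia.
  by case: (c12 k.+1 isT) => ->.
move=> h2; rewrite -addn1 key h2 //.
Qed.

Lemma a6 : a 6 = 11.
Proof. by rewrite (aS 5) // (aS 4) // (aS 3) // (aS 2) // (aS 1) // a1 !c_small. Qed.

Lemma aab k : a (a k.+1) + 1 = b k.+1.
Proof.
elim: k => [|k IH]; first by rewrite a1 a6 b1.
have hm := a_ge k.+1 isT.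
rewrite aS // bS //.
have [h2 h3] := F3 k.
case: (c12 k.+1 isT) => hc; rewrite hc.
  rewrite [a k.+1 + 1]addn1 (aS (a k.+1)); last by lia.
  rewrite h2; lia.
have -> : a k.+1 + 2 = (a k.+1).+2 by lia.
rewrite (aS (a k.+1).+1); last by lia.
rewrite (aS (a k.+1)); last by lia.
rewrite h2 h3 //; lia.
Qed.

Lemma b_lt n m : 1 <= n -> n < m -> b n < b m.
Proof.
move=> h hnm; rewrite !bE //; last by lia.
have := a_lt n m h hnm; lia.
Qed.

Lemma P2 n m : 1 <= n -> 1 <= m -> a n <> b m.
Proof.
move=> hn; case: m => [|k] // _ E.
have [h2 _] := F3 k.
have hm := a_ge k.+1 isT.
have E2 := aab k.
have E3 : a (a k.+1).+1 = a (a k.+1) + 2 by rewrite aS ?h2 //; lia.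
case: (leqP n (a k.+1)) => h.
  have := a_le n (a k.+1) hn h; lia.
have := a_le (a k.+1).+1 n isT h; lia.
Qed.

Lemma bracket x : 6 <= x -> exists n, 1 <= n /\ a n <= x < a n.+1.
Proof.
elim: x => [|x IH] // hx.
case: (leqP 6 x) => h6.
  have [n [hn /andP [h1 h2]]] := IH h6.
  case: (ltnP x.+1 (a n.+1)) => h3.
    exists n; split => //; apply/andP; split => //; lia.
  exists n.+1; split => //; have := a_lt n.+1 n.+2 isT (ltnSn _); lia.
exists 1; rewrite (aS 1) // a1; have := c12' 1 isT; lia.
Qed.

Lemma P3 x : 6 <= x -> (exists n, 1 <= n /\ x = a n) \/ (exists m, 1 <= m /\ x = b m).
Proof.
move=> hx; have [n [hn /andP [h1 h2]]] := bracket x hx.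
case: (eqVneq x (a n)) => [->|hne]; first by left; exists n.
right.
have hc : c n = 2 by move: h2; rewrite aS //; have := c12' n hn; lia.
have hn6 : 6 <= n.
  case: (leqP 6 n) => // h; rewrite c_small in hc => //; lia.
have [k' [hk /andP [h3 h4]]] := bracket n hn6.
case: k' hk h3 h4 => [|k] // _ h3 h4.
have [h5 h6] := F3 k.
case: (eqVneq n (a k.+1)) => [E|ne].
  exists k.+1; split => //; rewrite -aab -E.
  move: h2; rewrite aS // hc; lia.
move: h4; rewrite aS // => h4.
have hc2 : c k.+1 = 2 by have := c12' k.+1 isT; lia.
have E : n = (a k.+1).+1 by lia.
by move: hc; rewrite E h6.
Qed.

Definition good (x y : nat) : Prop :=
  x + y <= 5 \/
  exists n, 1 <= n /\ ((x, y) = (b n, a n) \/ (x, y) = (a n, b n)).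

Lemma good_sym x y : good x y -> good y x.
Proof.
case=> [h|[n [hn [[-> ->]|[-> ->]]]]]; [left; lia| |]; right; exists n; auto.
Qed.

Lemma pairE (p q r s : nat) : (p, q) = (r, s) -> p = r /\ q = s.
Proof. by case. Qed.

Lemma a_inj n m : 1 <= n -> 1 <= m -> a n = a m -> n = m.
Proof.
move=> hn hm E; case: (ltngtP n m) => // h.
  have := a_lt n m hn h; lia.
have := a_lt m n hm h; lia.
Qed.

Lemma b_inj n m : 1 <= n -> 1 <= m -> b n = b m -> n = m.
Proof.
move=> hn hm E; case: (ltngtP n m) => // h.
  have := b_lt n m hn h; lia.
have := b_lt m n hm h; lia.
Qed.

Lemma R1 n u : 1 <= n -> u < a n -> ~ good (b n) u.
Proof.
move=> hn hu; have ha := a_ge n hn; have hb := bE n hn.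
case=> [|[m [hm [/pairE [E1 E2]|/pairE [E1 E2]]]]]; first by lia.
  have E := b_inj n m hn hm E1; subst m; lia.
exact: (P2 m n hm hn (esym E1)).
Qed.

Lemma R2 n v : 1 <= n -> v < b n -> ~ good (a n) v.
Proof.
move=> hn hv; have := a_ge n hn => ha.
case=> [|[m [hm [/pairE [E1 E2]|/pairE [E1 E2]]]]]; first by lia.
  exact: (P2 n m hn hm E1).
have E := a_inj n m hn hm E1; subst m; lia.
Qed.

Lemma R3 n t : 1 <= n -> 1 <= t <= a n -> ~ good (a n - t) (b n - t).
Proof.
move=> hn ht; have := a_ge n hn => ha; have hb := bE n hn.
case=> [|[m [hm [/pairE [E1 E2]|/pairE [E1 E2]]]]]; first by lia.
  have := bE m hm; lia.
have := bE m hm => hbm.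
have E : m = n by lia.
subst m; lia.
Qed.

Definition moves_bad x y :=
  (forall u, u < x -> ~ good u y) /\ (forall v, v < y -> ~ good x v) /\
  (forall t, 1 <= t <= minn x y -> ~ good (x - t) (y - t)).

Lemma Ex x y : x <= y -> 6 <= x + y -> ~ good x y ->
  (exists u, u < x /\ good u y) \/ (exists v, v < y /\ good x v) \/
  (exists t, 1 <= t <= minn x y /\ good (x - t) (y - t)).
Proof.
move=> hxy hs hng.
case: (leqP 6 x) => hx; last first.
  right; left; exists (5 - x); split; [lia|left; lia].
case: (P3 x hx) => [[m [hm E]]|[m [hm E]]]; subst x.
  have hb := bE m hm.
  case: (ltngtP y (b m)) => hy.
  - case: (leqP (y - a m) 5) => hk.
      right; right; exists (a m); split; [lia|left; lia].
    set j := y - a m - 5.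
    have hj1 : 1 <= j by lia.
    have hj2 : j < m by lia.
    have hbj := bE j hj1.
    have hlt := a_lt j m hj1 hj2.
    right; right; exists (a m - a j); split; first by lia.
    right; exists j; split => //; right.
    congr pair; lia.
  - right; left; exists (b m); split => //; right; exists m; auto.
  - exfalso; apply: hng; right; exists m; subst y; auto.
right; left; exists (a m); split.
  have := bE m hm; lia.
right; exists m; auto.
Qed.

Lemma charP x y : good x y <-> x + y <= 5 \/ moves_bad x y.
Proof.
split.
  move=> hg; case: (leqP (x + y) 5) => hs; first by left.
  right; case: hg => [|[n [hn [[-> ->]|[-> ->]]]]]; first by lia.
    split; [|split].
    - by move=> u hu /good_sym; apply: R2.
    - by move=> v hv; apply: R1.
    - move=> t ht /good_sym; apply: R3 => //; lia.
  split; [|split].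
  - by move=> u hu /good_sym; apply: R1.
  - by move=> v hv; apply: R2.
  - move=> t ht; apply: R3 => //; lia.
case=> [h|[h1 [h2 h3]]]; first by left.
case: (leqP (x + y) 5) => hs; first by left.
apply: NNPP => hng.
case: (leqP x y) => hxy.
  case: (Ex x y hxy ltac:(lia) hng) => [[u [hu g]]|[[v [hv g]]|[t [ht g]]]].
  - exact: (h1 u hu g).
  - exact: (h2 v hv g).
  - exact: (h3 t ht g).
have hng' : ~ good y x by move/good_sym.
case: (Ex y x (ltnW hxy) ltac:(lia) hng') => [[u [hu g]]|[[v [hv g]]|[t [ht g]]]].
- exact: (h2 u hu (good_sym _ _ g)).
- exact: (h1 v hv (good_sym _ _ g)).
- apply: (h3 t); first by rewrite minnC.
  exact: good_sym.
Qed.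

Lemma fuelP k x y : x + y < k -> (isP_fuel k x y <-> good x y).
Proof.
elim: k x y => [|k IH] x y hk //.
rewrite charP /=; split.
  case/orP => [h|/and3P [h1 h2 h3]]; first by left.
  right; split; [|split].
  - move=> u hu; have := allP h1 u; rewrite mem_iota /= => /(_ hu) /negP.
    by rewrite (IH u y) //; lia.
  - move=> v hv; have := allP h2 v; rewrite mem_iota /= => /(_ hv) /negP.
    by rewrite (IH x v) //; lia.
  - move=> t ht; have := allP h3 t; rewrite mem_iota => /(_ ltac:(lia)) /negP.
    by rewrite (IH (x - t) (y - t)) //; lia.
case=> [h|[h1 [h2 h3]]]; first by rewrite /inT5 h.
apply/orP; right; apply/and3P; split; apply/allP.
- move=> u; rewrite mem_iota /= => hu; apply/negP; rewrite (IH u y); last by lia.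
  exact: h1.
- move=> v; rewrite mem_iota /= => hv; apply/negP; rewrite (IH x v); last by lia.
  exact: h2.
- move=> t; rewrite mem_iota => ht; apply/negP; rewrite (IH (x - t) (y - t)); last by lia.
  apply: h3; lia.
Qed.

Theorem theorem4p9 (x y : nat) :
  isP x y <->
  (x + y <= 5 \/
   exists n, 1 <= n /\ ((x, y) = (b n, a n) \/ (x, y) = (a n, b n))).
Proof. exact: fuelP. Qed.
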